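(* Let $\varphi$ be an individually rational rule. There exists a pick-an-object mechanism (i.e. a menu function $\mathbb{S}$) that sequentializes $\varphi$ if and only if $\varphi$ satisfies monotonic discoverability.
   Context: Let $A=\{a_1,\dots,a_n\}$ be a finite set of agents and $O=\{o_1,\dots,o_m\}\cup\{\emptyset\}$ a finite set of object types, where $\emptyset$ is the null object. Each agent $a$ has a strict preference $P_a$ (a linear order) over $O$, with weak version $R_a$ ($oR_ao'$ iff $oP_ao'$ or $o=o'$). $\mathbb{P}$ is the set of strict preferences over $O$, $\mathcal{P}=\mathbb{P}^n$ the set of preference profiles $P=(P_{a_1},\dots,P_{a_n})$. An allocation is any function $\mu:A\to O$; $\mathcal{M}$ is the set of allocations. A rule is a function $\varphi:\mathcal{P}\to\mathcal{M}$, with $\varphi_a(P)=\varphi(P)(a)$. $\varphi$ is individually rational if $\varphi_a(P)\,R_a\,\emptyset$ for all $P\in\mathcal{P}$, $a\in A$. Lower contour set: for $P\in\mathcal{P}$ and an allocation $\mu$, $\mathcal{L}(P,\mu)$ is the set of profiles $P'\in\mathcal{P}$ such that, for every agent $a$, $P'_a$ agrees with $P_a$ on $\mu(a)$ and on all objects that $P_a$ ranks above $\mu(a)$ (the same objects are ranked above $\mu(a)$, in the same order), while $P'_a$ may differ arbitrarily on objects ranked below $\mu(a)$ by $P_a$. A rule $\varphi$ satisfies monotonic discoverability if for every allocation $\mu$ and every $P\in\mathcal{P}$, either $\varphi(P)=\mu$, or there is an agent $a^*\in A$ such that $\varphi_{a^*}(P')\neq\mu(a^* )$ for all $P'\in\mathcal{L}(P,\mu)$.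 Pick-an-object mechanisms: a choice history is a finite (possibly empty) sequence $h=((\Omega_1,\omega_1),\dots,(\Omega_k,\omega_k))$ with $\Omega_j\subseteq O$ and $\omega_j\in\Omega_j$; its last choice is $\omega_k$. A preference $P_a$ is consistent with $h$ if $\omega_j R_a o$ for all $j$ and all $o\in\Omega_j$. A collective history $h^A=(h_1,\dots,h_n)$ is an $n$-tuple of choice histories (one per agent); $h^{A-\emptyset}$ denotes the tuple of empty histories. A menu function $\mathbb{S}$ assigns to each collective history an $n$-tuple of subsets of $O$ (menus) such that all menus in $\mathbb{S}(h^{A-\emptyset})$ are non-empty, and for any other collective history $h^A$ in which agent $i$'s history ends with $(\Omega_k,\omega_k)$, agent $i$'s menu is a subset of $\Omega_k\setminus\{\omega_k\}$. The pick-an-object mechanism $\mathbb{S}$ runs as follows: in period 1 every agent chooses one element from her menu in $\mathbb{S}(h^{A-\emptyset})$, and (menu, choice) is appended to her history. In each period $t>1$, with current collective history $h^A$, if every menu in $\mathbb{S}(h^A)$ is empty the procedure stops and each agent is assigned the last object she chose; otherwise each agent with a non-empty menu chooses one element of it and (menu, choice) is appended to her history, while agents with empty menus make no choice. An agent follows the straightforward strategy with respect to $P_a$ if whenever presented with a menu she chooses its $P_a$-most-preferred element. $\mathbb{S}$ sequentializes $\varphi$ if for every $P\in\mathcal{P}$, when every agent $a$ follows the straightforward strategy with respect to $P_a$, the mechanism outputs $\varphi(P)$. *)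

(* Defs.v *)
From mathcomp Require Import all_boot.
Set Implicit Arguments. Unset Strict Implicit. Unset Printing Implicit Defensive.

(* A strict preference (linear order) over O is represented canonically as the
   list of all objects, from most preferred to least preferred. *)
Definition pref (O : finType) := {s : seq O | uniq s && (size s == #|O|)}.
Definition plist (O : finType) (p : pref O) : seq O := proj1_sig p.

Definition strict_pref (O : finType) (p : pref O) (x y : O) : bool :=
  index x (plist p) < index y (plist p).
Definition weak_pref (O : finType) (p : pref O) (x y : O) : bool :=
  strict_pref p x y || (x == y).

Definition profile (A O : finType) := A -> pref O.
Definition allocation (A O : finType) := A -> O.
Definition rule (A O : finType) := profile A O -> allocation A O.

Definition individually_rational (A O : finType) (null : O) (phi : rule A O) : Prop :=
  forall (P : profile A O) (a : A), weak_pref (P a) (phi P a) null.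

(* P' \in L(P, mu): for each agent a, P'_a agrees with P_a on mu(a) and on
   everything above it (same objects, same order). *)
Definition lower_contour (A O : finType) (P : profile A O) (mu : allocation A O)
    (P' : profile A O) : Prop :=
  forall a : A,
    take (index (mu a) (plist (P a))).+1 (plist (P' a))
    = take (index (mu a) (plist (P a))).+1 (plist (P a)).

Definition monotonic_discoverability (A O : finType) (phi : rule A O) : Prop :=
  forall (mu : allocation A O) (P : profile A O),
    phi P = mu \/
    exists astar : A, forall P' : profile A O,
      lower_contour P mu P' -> phi P' astar <> mu astar.

Definition choice_history (O : finType) := seq ({set O} * O).
Definition collective_history (A O : finType) := A -> choice_history O.
Definition empty_history (A O : finType) : collective_history A O := fun _ => [::].
Definition menu_function (A O : finType) := collective_history A O -> A -> {set O}.

Definition is_menu_function (A O : finType) (S : menu_function A O) : Prop :=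
  (forall a : A, S (@empty_history A O) a != set0) /\
  (forall (h : collective_history A O) (a : A) (s : choice_history O)
          (M : {set O}) (w : O),
     h a = rcons s (M, w) -> S h a \subset M :\ w).

Definition straightforward_choice (O : finType) (null : O) (p : pref O) (M : {set O}) : O :=
  head null [seq x <- plist p | x \in M].

(* One period of the mechanism, all agents straightforward w.r.t. P.
   Agents with empty menus make no choice; if all menus are empty the
   history is unchanged (the procedure has stopped). *)
Definition mech_step (A O : finType) (null : O) (S : menu_function A O)
    (P : profile A O) (h : collective_history A O) : collective_history A O :=
  fun a => if S h a == set0 then h a
           else rcons (h a) (S h a, straightforward_choice null (P a) (S h a)).

Definition stopped (A O : finType) (S : menu_function A O) (h : collective_history A O) : Prop :=
  forall a : A, S h a = set0.

Definition last_choice (O : finType) (null : O) (s : choice_history O) : O :=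
  (last (set0, null) s).2.

Definition sequentializes (A O : finType) (null : O) (S : menu_function A O)
    (phi : rule A O) : Prop :=
  forall P : profile A O, exists k : nat,
    let h := iter k (mech_step null S P) (@empty_history A O) in
    stopped S h /\ forall a : A, last_choice null (h a) = phi P a.

(* Main.v *)
Require Import Defs.
From Stdlib Require Import Classical FunctionalExtensionality ClassicalEpsilon.
From mathcomp Require Import all_boot zify.
Set Implicit Arguments. Unset Strict Implicit. Unset Printing Implicit Defensive.

Section Aux.
Variables (A O : finType) (null : O).

Lemma plist_uniq (p : pref O) : uniq (plist p).
Proof. by case: p => s /= /andP[]. Qed.

Lemma plist_size (p : pref O) : size (plist p) = #|O|.
Proof. by case: p => s /= /andP[_ /eqP]. Qed.

Lemma mem_plist (p : pref O) x : x \in plist p.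
Proof.
apply/negPn/negP => Hx.
have U : uniq (x :: plist p) by rewrite /= Hx plist_uniq.
move/card_uniqP: U => /= Hc.
have := max_card (mem (x :: plist p)).
by rewrite Hc /= plist_size ltnn.
Qed.

Lemma choice_in (p : pref O) (M : {set O}) :
  M != set0 -> straightforward_choice null p M \in M.
Proof.
case/set0Pn => x Hx.
rewrite /straightforward_choice.
have : x \in [seq y <- plist p | y \in M] by rewrite mem_filter Hx mem_plist.
case: [seq y <- plist p | y \in M] (filter_all (fun y => y \in M) (plist p)) => //= y l.
by case/andP.
Qed.

Lemma choice_agree (p p' : pref O) (M : {set O}) (m x : O) :
  take (index m (plist p)).+1 (plist p') = take (index m (plist p)).+1 (plist p) ->
  x \in M -> index x (plist p) <= index m (plist p) ->
  straightforward_choice null p' M = straightforward_choice null p M.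
Proof.
move=> Ht xM Hi; rewrite /straightforward_choice.
set i := (index m (plist p)).+1.
rewrite -(cat_take_drop i (plist p')) -(cat_take_drop i (plist p)) !filter_cat Ht.
have : x \in [seq y <- take i (plist p) | y \in M].
  rewrite mem_filter xM.
  have Hl : index x (plist p) < i by rewrite ltnS.
  rewrite -(nth_index null (mem_plist p x)) -(nth_take null Hl).
  apply: mem_nth. rewrite size_take.
  have := index_mem x (plist p); rewrite mem_plist => H.
  by case: ifP => _ //.
by case: [seq y <- take i (plist p) | y \in M].
Qed.

End Aux.
Section Fwd.
Variables (A O : finType) (null : O) (phi : rule A O) (S : menu_function A O).
Hypothesis wf : is_menu_function S.
Hypothesis Hs : sequentializes null S phi.

Definition run (P : profile A O) j := iter j (mech_step null S P) (@empty_history A O).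

Lemma step_stopped P h : stopped S h -> mech_step null S P h = h.
Proof. move=> H; apply: functional_extensionality => a; by rewrite /mech_step H eqxx. Qed.

Lemma iter_stopped P h n : stopped S h -> iter n (mech_step null S P) h = h.
Proof. move=> H; elim: n => //= n ->; exact: step_stopped. Qed.

Lemma run_stable P k k' : stopped S (run P k) -> k <= k' -> run P k' = run P k.
Proof.
move=> H Hk; rewrite /run -(subnK Hk) iterD; exact: iter_stopped.
Qed.

Lemma seq_final P k : stopped S (run P k) -> forall a, last_choice null (run P k a) = phi P a.
Proof.
move=> H a; case: (Hs P) => k0 [H0 H1].
rewrite -(run_stable H (leq_maxl k k0)) (run_stable H0 (leq_maxr k k0)); exact: H1.
Qed.

Definition good P (mu : allocation A O) j := forall a, S (run P j) a != set0 ->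
  exists x, x \in S (run P j) a /\ index x (plist (P a)) <= index (mu a) (plist (P a)).

Lemma run_agree P P' mu j : (forall i, i < j -> good P mu i) -> lower_contour P mu P' ->
  run P' j = run P j.
Proof.
move=> Hg HL; elim: j Hg => [|j IH] Hg //=.
rewrite -/(run P' j) -/(run P j) IH; last by move=> i Hi; apply: Hg; exact: ltnW.
apply: functional_extensionality => a; rewrite /mech_step.
case: ifP => // /negbT Hne.
have [x [xM Hx]] := Hg j (ltnSn j) a Hne.
by rewrite (choice_agree null (HL a) xM Hx).
Qed.

Lemma bad_later P' j0 a : S (run P' j0) a != set0 -> forall i,
  exists s M' w', run P' (i + j0).+1 a = rcons s (M', w') /\ M' \subset S (run P' j0) a /\ w' \in M'.
Proof.
move=> Hne; elim=> [|i [s [M' [w' [E [HM Hw]]]]]].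
  rewrite add0n /= -/(run P' j0) /mech_step (negbTE Hne).
  by exists (run P' j0 a), (S (run P' j0) a), (straightforward_choice null (P' a) (S (run P' j0) a));
     split; [|split; [exact: subxx| exact: choice_in]].
rewrite addSn /= -/(run P' (i + j0).+1) {1}/mech_step.
case: ifP => [_|/negbT Hne']; first by exists s, M', w'.
set h := run P' (i + j0).+1.
exists (h a), (S h a), (straightforward_choice null (P' a) (S h a)); split => //; split; last exact: choice_in.
apply: subset_trans HM; apply: subset_trans (proj2 wf h a s M' w' E) _; exact: subD1set.
Qed.

Lemma min_ex (p : nat -> Prop) : (exists j, ~ p j) -> exists j, ~ p j /\ forall i, i < j -> p i.
Proof.
move=> [j Hj]; apply: NNPP => H; apply: Hj.
suff: forall n i, i < n -> p i by move=> /(_ j.+1 j (ltnSn j)).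
elim=> [//|n IH] i; rewrite ltnS leq_eqVlt => /orP[/eqP ->|]; last exact: IH.
apply: NNPP => Hn; apply: H; exists n; split => //.
Qed.

Lemma forward : monotonic_discoverability phi.
Proof.
move=> mu P; case: (classic (phi P = mu)) => Hmu; [by left | right].
case: (classic (forall j, good P mu j)) => Hg.
  have [a Ha] : exists a, phi P a <> mu a.
    apply: NNPP => H; apply: Hmu; apply: functional_extensionality => a.
    by apply: NNPP => H'; apply: H; exists a.
  exists a => P' HL.
  have E : forall j, run P' j = run P j by move=> j; apply: run_agree => // i _.
  case: (Hs P') => k' [H0 H1].
  have H0' : stopped S (run P k') by rewrite -E.
  rewrite -(H1 a) -/(run P' k') E (seq_final H0'); exact: Ha.
have [j0 [Hj0 Hmin]] := min_ex (not_all_ex_not _ _ Hg).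
have [a Ha] : exists a, S (run P j0) a != set0 /\
    forall x, x \in S (run P j0) a -> index (mu a) (plist (P a)) < index x (plist (P a)).
  apply: NNPP => H; apply: Hj0 => a Hne; apply: NNPP => H'; apply: H; exists a; split => //.
  move=> x xM; rewrite ltnNge; apply/negP => Hx; apply: H'; by exists x.
case: Ha => Hne Hlt.
exists a => P' HL Heq.
have E : run P' j0 = run P j0 by apply: run_agree HL => i Hi; exact: Hmin.
rewrite -E in Hne Hlt.
case: (Hs P') => k' [H0 H1].
case: (leqP k' j0) => Hk.
  move: Hne; by rewrite (run_stable H0 Hk) H0 eqxx.
have [s [M' [w' [E' [HM Hw]]]]] := bad_later Hne (k' - j0).-1.
have Ek : ((k' - j0).-1 + j0).+1 = k'.
  rewrite -addSn prednK ?subnK ?subn_gt0 //; exact: ltnW.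
rewrite Ek in E'.
have : mu a \in S (run P' j0) a.
  rewrite -Heq -(H1 a) -/(run P' k') /last_choice E' last_rcons /=; exact: (subsetP HM).
by move/Hlt; rewrite ltnn.
Qed.

End Fwd.
Section Bwd.
Variables (A O : finType) (null : O) (phi : rule A O).

Definition cons_h (h : collective_history A O) (P' : profile A O) :=
  forall b, take (size (h b)) (plist (P' b)) = map snd (h b).
Definition qprop h a := forall P', cons_h h P' -> phi P' a <> last_choice null (h a).
Definition qb h a : bool := if excluded_middle_informative (qprop h a) then true else false.
Definition Smech : menu_function A O := fun h a =>
  if h a == [::] then setT
  else if [pick b | qb h b] == Some a
       then (last (set0, null) (h a)).1 :\ (last (set0, null) (h a)).2 else set0.

Lemma Smech_wf : is_menu_function Smech.
Proof.
split.
  move=> a; rewrite /Smech /empty_history eqxx; apply/set0Pn; by exists null.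
move=> h a s M w E; rewrite /Smech E last_rcons /=.
have -> : (rcons s (M, w) == [::]) = false by rewrite -size_eq0 size_rcons.
case: ifP => _ //; exact: sub0set.
Qed.

Definition hist (s : seq O) n :=
  [seq ([set x | x \notin take j s], nth null s j) | j <- iota 0 n].

Lemma size_hist s n : size (hist s n) = n.
Proof. by rewrite size_map size_iota. Qed.

Lemma hist_snd s n : n <= size s -> map snd (hist s n) = take n s.
Proof. move=> H; rewrite -map_comp /=; exact: map_nth_iota0. Qed.

Lemma hist_S s n : hist s n.+1 = rcons (hist s n) ([set x | x \notin take n s], nth null s n).
Proof. by rewrite /hist -addn1 iotaD map_cat cats1. Qed.

Lemma menu_shrink s n : n < size s ->
  [set x | x \notin take n s] :\ nth null s n = [set x | x \notin take n.+1 s].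
Proof.
move=> H; apply/setP => x; rewrite !inE (take_nth null H) mem_rcons in_cons negb_or.
by [].
Qed.

Lemma choice_hist (p : pref O) n : n < size (plist p) ->
  straightforward_choice null p [set x | x \notin take n (plist p)] = nth null (plist p) n.
Proof.
move=> H; rewrite /straightforward_choice.
set s := plist p.
have U : uniq s by exact: plist_uniq.
have -> : [seq x <- s | x \in [set x | x \notin take n s]] = drop n s.
  transitivity [seq x <- take n s ++ drop n s | x \in [set x | x \notin take n s]];
    first by rewrite cat_take_drop.
  rewrite filter_cat.
  have -> : [seq x <- take n s | x \in [set x | x \notin take n s]] = [::].
    rewrite -(filter_pred0 (take n s)); apply: eq_in_filter => x xt; by rewrite inE xt.
  apply/all_filterP.
  move: U; rewrite -{1}(cat_take_drop n s) cat_uniq => /and3P[_ Hh _].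
  rewrite -all_predC in Hh; apply: sub_all Hh => x /=; by rewrite inE.
by rewrite -nth0 nth_drop addn0.
Qed.

Variable P : profile A O.

Definition Inv (h : collective_history A O) := forall b,
  h b = hist (plist (P b)) (size (h b)) /\
  0 < size (h b) <= (index (phi P b) (plist (P b))).+1.

Lemma index_phi b : index (phi P b) (plist (P b)) < size (plist (P b)).
Proof. by rewrite index_mem mem_plist. Qed.

Lemma last_hist s m : last_choice null (hist s m.+1) = nth null s m.
Proof. by rewrite /last_choice hist_S last_rcons. Qed.

Lemma cons_iff h : Inv h -> forall P', cons_h h P' <->
  lower_contour P (fun b => last_choice null (h b)) P'.
Proof.
move=> HI P'.
have key : forall b, (index (last_choice null (h b)) (plist (P b))).+1 = size (h b)
    /\ map snd (h b) = take (size (h b)) (plist (P b)).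
  move=> b; case: (HI b) => E /andP[H1 H2].
  have Hs : size (h b) <= size (plist (P b)) := leq_trans H2 (index_phi b).
  move: E H1 Hs; set n := size (h b) => E H1 Hs.
  rewrite E; split; last by rewrite hist_snd.
  case: n E H1 Hs => // m _ _ Hs.
  rewrite last_hist index_uniq //; exact: plist_uniq.
split => H b; have [K1 K2] := key b.
  by rewrite K1 H K2.
by rewrite K2 -K1; exact: H b.
Qed.

Lemma cons_self h : Inv h -> cons_h h P.
Proof.
move=> HI b; case: (HI b) => E /andP[_ H2].
move: E H2; set n := size (h b) => E H2.
rewrite E hist_snd //; exact: (leq_trans H2 (index_phi b)).
Qed.

Definition meas (h : collective_history A O) := \sum_(b : A) (#|O| - size (h b)).

Hypothesis MD : monotonic_discoverability phi.

Lemma step_case h : Inv h ->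
  (stopped Smech h /\ forall b, last_choice null (h b) = phi P b) \/
  (Inv (mech_step null Smech P h) /\ meas (mech_step null Smech P h) < meas h).
Proof.
move=> HI.
have hne : forall b, (h b == [::]) = false.
  move=> b; case: (HI b) => _ /andP[H1 _]; apply/negbTE; apply: contraTneq H1 => ->; by [].
case Hp: [pick b | qb h b] => [a|].
  have Ha : qb h a by case: pickP Hp => // x Hx [<-].
  right.
  have Hq : qprop h a by move: Ha; rewrite /qb; case: excluded_middle_informative.
  have Hpa := index_phi a.
  case: (HI a) => E /andP[H1 H2].
  move: E H1 H2; set s := plist (P a); set n := size (h a) => E H1 H2.
  have Hlast : last_choice null (h a) = nth null s n.-1.
    by rewrite E; case: n {E H2} H1 => // m _; rewrite last_hist.
  have Hneq := Hq P (cons_self HI); rewrite Hlast in Hneq.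
  have Hlt : n <= index (phi P a) s.
    rewrite leq_eqVlt in H2; case/orP: H2 => [/eqP H2|]; last by rewrite ltnS.
    exfalso; apply: Hneq; rewrite H2 /= nth_index //; exact: mem_plist.
  have HnS : n < size s := leq_ltn_trans Hlt Hpa.
  have Hmenu : Smech h a = [set x | x \notin take n s].
    rewrite /Smech hne Hp eqxx E.
    case: n {E Hlast Hneq H2} H1 Hlt HnS => // m _ _ HnS.
    by rewrite hist_S last_rcons /= menu_shrink // ltnW.
  have Hmne : Smech h a != set0.
    apply/set0Pn; exists (phi P a); rewrite Hmenu inE; apply/negP => Hin.
    have : index (phi P a) s < n.
      rewrite -(cat_take_drop n s) index_cat Hin.
      have := index_mem (phi P a) (take n s); rewrite Hin => Hl; apply: leq_trans Hl _.
      by rewrite size_take; case: ifP => // /negbT; rewrite -leqNgt.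
    by rewrite ltnNge Hlt.
  have Hsa : mech_step null Smech P h a = hist s n.+1.
    by rewrite /mech_step (negbTE Hmne) Hmenu choice_hist // E hist_S.
  have Hsb : forall b, b != a -> mech_step null Smech P h b = h b.
    move=> b Hb; rewrite /mech_step.
    have -> : Smech h b = set0.
      by rewrite /Smech hne Hp; case: eqP => // [[Eab]]; move: Hb; rewrite Eab eqxx.
    by rewrite eqxx.
  split.
    move=> b; case: (eqVneq b a) => [->|Hb]; last by rewrite Hsb //; exact: HI.
    by rewrite Hsa size_hist.
  rewrite /meas (bigD1 a) //= [X in _ < X](bigD1 a) //=.
  have -> : \sum_(b | b != a) (#|O| - size (mech_step null Smech P h b)) =
            \sum_(b | b != a) (#|O| - size (h b)).
    by apply: eq_bigr => b Hb; rewrite Hsb.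
  rewrite Hsa size_hist -/n ltn_add2r.
  have : n < #|O| by rewrite -(plist_size (P a)).
  move=> Hn; rewrite subnS prednK // subn_gt0 //.
left.
have Hn : forall b, qb h b = false by case: pickP Hp => // H _.
case: (MD (fun b => last_choice null (h b)) P) => [E|[a Ha]].
  split; last by move=> b; rewrite E.
  by move=> b; rewrite /Smech hne Hp.
exfalso; move: (Hn a); rewrite /qb; case: excluded_middle_informative => // Hq _.
apply: Hq => P' /(cons_iff HI P'); exact: Ha.
Qed.

End Bwd.

Section Bwd2.
Variables (A O : finType) (null : O) (phi : rule A O).
Hypothesis MD : monotonic_discoverability phi.

Lemma run_from P m : forall h, Inv null phi P h -> meas h <= m ->
  exists k, stopped (Smech null phi) (iter k (mech_step null (Smech null phi) P) h) /\
    forall b, last_choice null (iter k (mech_step null (Smech null phi) P) h b) = phi P b.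
Proof.
elim: m => [|m IH] h HI Hm; case: (step_case MD HI) => [[H1 H2]|[H1 H2]].
- by exists 0.
- by move: (leq_trans H2 Hm).
- by exists 0.
- have [k Hk] := IH _ H1 (leq_trans H2 Hm); exists k.+1; by rewrite iterSr.
Qed.

Lemma init_inv P : Inv null phi P (mech_step null (Smech null phi) P (@empty_history A O)).
Proof.
move=> b.
have Hs : 0 < size (plist (P b)) := leq_ltn_trans (leq0n _) (index_phi phi P b).
have T0 : [set x | x \notin take 0 (plist (P b))] = setT by apply/setP => x; rewrite !inE take0.
have ST : Smech null phi (@empty_history A O) b = setT by rewrite /Smech /empty_history eqxx.
have -> : mech_step null (Smech null phi) P (@empty_history A O) b = hist null (plist (P b)) 1.
  rewrite /mech_step ST.
  have -> : (setT == set0 :> {set O}) = false.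
    by apply/negbTE/set0Pn; exists null.
  by rewrite -T0 choice_hist.
by rewrite size_hist.
Qed.

Lemma backward : exists S : menu_function A O, is_menu_function S /\ sequentializes null S phi.
Proof.
exists (Smech null phi); split; first exact: Smech_wf.
move=> P.
have [k Hk] := run_from (init_inv P) (leqnn _).
by exists k.+1; rewrite iterSr.
Qed.
End Bwd2.

Theorem theorem1 (A O : finType) (null : O) (phi : rule A O) :
  individually_rational null phi ->
  ((exists S : menu_function A O, is_menu_function S /\ sequentializes null S phi)
   <-> monotonic_discoverability phi).
Proof.
move=> _; split.
  by move=> [S [wf Hs]]; exact: forward wf Hs.
exact: backward.
Qed.
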